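(* Assume (H1) for some $\alpha\in[0,1]$ and (H2)–(H4). Then: (1) (Sub-critical) If $\lambda\le\lambda_s$, there exists a unique $z\le z_s$ with $\lambda=\sum_{j\ge1}a_jQ_jz^{j+1}+a_1z^2$, and $(Q_iz^i)_{i\ge1}$ is a steady state. Moreover, if $b_i\le i\,a_i$ for all sufficiently large $i$, then $(Q_iz^i)_{i\ge1}$ is the unique steady state; if instead there is $\nu>1$ with $b_i>i^\nu a_i$ for all sufficiently large $i$, then there are infinitely many steady states. (2) (Super-critical) If $\lambda>\lambda_s$, there exists no steady state.
   Context: Let $\lambda\ge 0$ and let $(a_i)_{i\ge1}$, $(b_i)_{i\ge1}$ be sequences of nonnegative real numbers. Consider the infinite system of ODEs $\frac{d}{dt}C_1=\lambda-\sum_{j\ge1}a_jC_1C_j-a_1C_1^2$, $\frac{d}{dt}C_i=J_{i-1}-J_i$ for $i\ge2$, where $J_i=a_iC_1C_i-b_{i+1}C_{i+1}$ for $i\ge1$. A steady state is a sequence $C=(C_i)_{i\ge1}$ of nonnegative reals with $\sum_{i\ge1}a_iC_i<\infty$ such that $\lambda-\sum_{j\ge1}a_jC_1C_j-a_1C_1^2=0$ and $J_{i-1}=J_i$ for all $i\ge2$ (i.e. a constant-in-time solution). (H1): there exists $a\ge0$ such that $0\le a_i\le a\,i^\alpha$ and $b_i\ge0$ for all $i\ge1$. Detailed balance coefficients: $Q_1=1$, $Q_i=\prod_{j=2}^i\frac{a_{j-1}}{b_j}$ for $i\ge2$. $z_s\in[0,+\infty]$ is the radius of convergence of the power series $\sum_i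 a_iQ_iz^i$, and $\lambda_s:=\sup_{z\le z_s}\big(\sum_{j\ge1}a_jQ_jz^{j+1}+a_1z^2\big)$. (H2): $\inf_i a_i=\underline a>0$ and $\inf_i b_i=\underline b>0$. (H3): $\lim_{i\to\infty}Q_{i+1}/Q_i=1/z_s$. (H4): there is $l>0$ with $\lim_{i\to\infty}a_{i+1}/a_i=l$. *)

(* Defs.v *)
From Stdlib Require Import Reals Lra.
From Coquelicot Require Import Coquelicot.
Open Scope R_scope.

(* Sequences are indexed by nat; only indices i >= 1 are meaningful. *)

(* Detailed balance coefficients: Q_1 = 1, Q_{m+1} = Q_m * a_m / b_{m+1},
   i.e. Q_i = prod_{j=2}^i a_{j-1}/b_j.  (Q 0 is an irrelevant dummy.) *)
Fixpoint Qc (a b : nat -> R) (n : nat) : R :=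
  match n with
  | O => 1
  | S m => match m with
           | O => 1
           | S _ => Qc a b m * a m / b n
           end
  end.

Definition zs_coef (a b : nat -> R) (n : nat) : R :=
  match n with O => 0 | _ => a n * Qc a b n end.

Definition z_s (a b : nat -> R) : Rbar := CV_radius (zs_coef a b).

(* F(z) = sum_{j>=1} a_j Q_j z^{j+1} + a_1 z^2, valued in [0,+oo] for z >= 0
   (limit of the nondecreasing partial sums). *)
Definition Fz (a b : nat -> R) (z : R) : Rbar :=
  Rbar_plus (Lim_seq (fun n => sum_n (fun j => a (S j) * Qc a b (S j) * z ^ (S j + 1)) n))
            (Finite (a 1%nat * z ^ 2)).

Definition lambda_s (a b : nat -> R) : Rbar :=
  Rbar_lub (fun y => exists z : R, 0 <= z /\ Rbar_le (Finite z) (z_s a b) /\ y = Fz a b z).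

Definition Rbar_inv_ext (z : Rbar) : Rbar :=
  match z with
  | Finite r => if Req_EM_T r 0 then p_infty else Finite (/ r)
  | _ => Finite 0
  end.

Definition Jflux (a b C : nat -> R) (i : nat) : R :=
  a i * C 1%nat * C i - b (S i) * C (S i).

Definition steady_state (a b : nat -> R) (lam : R) (C : nat -> R) : Prop :=
  (forall i, (1 <= i)%nat -> 0 <= C i) /\
  ex_series (fun j => a (S j) * C (S j)) /\
  lam - Series (fun j => a (S j) * C 1%nat * C (S j)) - a 1%nat * C 1%nat ^ 2 = 0 /\
  (forall i, (2 <= i)%nat -> Jflux a b C (i - 1) = Jflux a b C i).

Definition H1 (a b : nat -> R) (alpha : R) : Prop :=
  exists a0 : R, 0 <= a0 /\
    forall i, (1 <= i)%nat ->
      0 <= a i /\ a i <= a0 * Rpower (INR i) alpha /\ 0 <= b i.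

Definition H2 (a b : nat -> R) : Prop :=
  (exists la, 0 < la /\ forall i, (1 <= i)%nat -> la <= a i) /\
  (exists lb, 0 < lb /\ forall i, (1 <= i)%nat -> lb <= b i).

Definition H3 (a b : nat -> R) : Prop :=
  is_lim_seq (fun i => Qc a b (S i) / Qc a b i) (Rbar_inv_ext (z_s a b)).

Definition H4 (a : nat -> R) : Prop :=
  exists l, 0 < l /\ is_lim_seq (fun i => a (S i) / a i) l.

(* Infinitely many steady states: an injective family (as sequences indexed by i >= 1). *)
Definition infinitely_many_steady (a b : nat -> R) (lam : R) : Prop :=
  exists f : nat -> nat -> R,
    (forall n, steady_state a b lam (f n)) /\
    (forall n m, n <> m -> exists i, (1 <= i)%nat /\ f n i <> f m i).

(* Main.v *)
Require Import Defs.
From Stdlib Require Import Reals Lra Lia.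
From Coquelicot Require Import Coquelicot.
Open Scope R_scope.


Lemma apos a b : H2 a b -> forall i, (1 <= i)%nat -> 0 < a i.
Proof. intros [[la [Hla Ha]] _] i Hi. specialize (Ha i Hi). lra. Qed.
Lemma bpos a b : H2 a b -> forall i, (1 <= i)%nat -> 0 < b i.
Proof. intros [_ [lb [Hlb Hb]]] i Hi. specialize (Hb i Hi). lra. Qed.

Lemma Qc_SS a b k : Qc a b (S (S k)) = Qc a b (S k) * a (S k) / b (S (S k)).
Proof. reflexivity. Qed.

Lemma Qc_pos a b : H2 a b -> forall i, 0 < Qc a b i.
Proof.
  intros H i. induction i as [|[|k] IH]; try (simpl; lra).
  rewrite Qc_SS. apply Rdiv_lt_0_compat.
  - apply Rmult_lt_0_compat; [exact IH| apply (apos a b H); lia].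
  - apply (bpos a b H); lia.
Qed.

Lemma flux_const a b lam C : steady_state a b lam C ->
  forall i, (1 <= i)%nat -> Jflux a b C i = Jflux a b C 1.
Proof.
  intros [_ [_ [_ HJ]]] i Hi. induction i as [|i IH]; [lia|].
  destruct (Nat.eq_dec i 0) as [->|Hne]; [reflexivity|].
  rewrite <- IH by lia. specialize (HJ (S i)). replace (S i - 1)%nat with i in HJ by lia.
  symmetry; apply HJ; lia.
Qed.

Lemma J0_form a b lam C : H2 a b -> steady_state a b lam C -> Jflux a b C 1 = 0 ->
  forall i, (1 <= i)%nat -> C i = Qc a b i * C 1%nat ^ i.
Proof.
  intros H2' Hs HJ0 i Hi. induction i as [|i IH]; [lia|].
  destruct i as [|k]. { simpl. ring. }

  assert (HJ := flux_const a b lam C Hs (S k) ltac:(lia)). rewrite HJ0 in HJ.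
  unfold Jflux in HJ. rewrite IH in HJ by lia.
  assert (Hb := bpos a b H2' (S (S k)) ltac:(lia)).
  rewrite Qc_SS. simpl pow in *. field_simplify; [|lra].
  apply Rmult_eq_reg_r with (b (S (S k))); [|lra].
  field_simplify; [|lra]. nra.
Qed.


Definition uu a b z j := a (S j) * Qc a b (S j) * z ^ (S j + 1).
Definition Gs a b z := Lim_seq (fun n => sum_n (uu a b z) n).

Lemma Fz_eq a b z : Fz a b z = Rbar_plus (Gs a b z) (Finite (a 1%nat * z ^ 2)).
Proof. reflexivity. Qed.

Lemma uu_nonneg a b z j : H2 a b -> 0 <= z -> 0 <= uu a b z j.
Proof.
  intros H Hz. unfold uu. apply Rmult_le_pos; [|apply pow_le; lra].
  apply Rmult_le_pos; [apply Rlt_le, (apos a b H); lia|apply Rlt_le, Qc_pos, H].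
Qed.

Lemma incr_le (f : nat -> R) : (forall n, f n <= f (S n)) -> forall m n, (m <= n)%nat -> f m <= f n.
Proof.
  intros Hf m n Hmn. induction Hmn; [lra|]. specialize (Hf m0). lra.
Qed.

Lemma sum_incr' (v : nat -> R) : (forall j, 0 <= v j) -> forall n, sum_n v n <= sum_n v (S n).
Proof. intros Hv n. rewrite sum_Sn. unfold plus; simpl. specialize (Hv (S n)). lra. Qed.

Lemma sum_nonneg' (v : nat -> R) : (forall j, 0 <= v j) -> forall n, 0 <= sum_n v n.
Proof. intros Hv n. induction n. rewrite sum_O. apply Hv.
  rewrite sum_Sn. unfold plus; simpl. specialize (Hv (S n)). lra. Qed.

Lemma Gs_lim a b z : H2 a b -> 0 <= z -> is_lim_seq (sum_n (uu a b z)) (Gs a b z).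
Proof.
  intros H Hz. apply Lim_seq_correct, ex_lim_seq_incr, sum_incr'.
  intro; apply uu_nonneg; auto.
Qed.

Lemma Gs_fin_series a b z g : H2 a b -> 0 <= z -> Gs a b z = Finite g -> is_series (uu a b z) g.
Proof. intros H Hz Hg. pose proof (Gs_lim a b z H Hz) as L. rewrite Hg in L. exact L. Qed.

Lemma series_Gs a b z g : is_series (uu a b z) g -> Gs a b z = Finite g.
Proof. intro Hs. apply is_lim_seq_unique. exact Hs. Qed.

Lemma ps_le_Gs a b z n : H2 a b -> 0 <= z -> Rbar_le (sum_n (uu a b z) n) (Gs a b z).
Proof.
  intros H Hz. rewrite <- (Lim_seq_const (sum_n (uu a b z) n)). apply Lim_seq_le_loc.
  exists n. intros m Hm. apply incr_le; auto. apply sum_incr'. intro; apply uu_nonneg; auto.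
Qed.

Lemma Gs_nonneg a b z : H2 a b -> 0 <= z -> Rbar_le 0 (Gs a b z).
Proof.
  intros H Hz. eapply Rbar_le_trans; [|apply (ps_le_Gs a b z 0 H Hz)]. simpl.
  apply sum_nonneg'. intro; apply uu_nonneg; auto.
Qed.

Lemma Gs_mono a b z1 z2 : H2 a b -> 0 <= z1 <= z2 -> Rbar_le (Gs a b z1) (Gs a b z2).
Proof.
  intros H Hz. apply Lim_seq_le_loc. exists 0%nat. intros n _.
  induction n.
  - rewrite !sum_O. unfold uu. apply Rmult_le_compat_l.
    + apply Rmult_le_pos; [apply Rlt_le, (apos a b H); lia|apply Rlt_le, Qc_pos, H].
    + apply pow_incr; lra.
  - rewrite !sum_Sn. unfold plus; simpl. apply Rplus_le_compat; [exact IHn|].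
    unfold uu. apply Rmult_le_compat_l.
    + apply Rmult_le_pos; [apply Rlt_le, (apos a b H); lia|apply Rlt_le, Qc_pos, H].
    + apply pow_incr; lra.
Qed.

Lemma Fz_fin a b z l : Fz a b z = Finite l -> exists g, Gs a b z = Finite g /\ l = g + a 1%nat * z ^ 2.
Proof.
  rewrite Fz_eq. destruct (Gs a b z) as [g| |]; simpl; intro E; try discriminate.
  exists g. split; auto. injection E; auto.
Qed.

Lemma Gs_0 a b : Gs a b 0 = Finite 0.
Proof.
  unfold Gs. rewrite <- (Lim_seq_const 0). apply Lim_seq_ext. intro n.
  induction n. rewrite sum_O. unfold uu. simpl. ring.
  rewrite sum_Sn, IHn. unfold plus, uu; simpl. ring.
Qed.

Lemma Fz_0 a b : Fz a b 0 = Finite 0.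
Proof. rewrite Fz_eq, Gs_0. simpl. f_equal. ring. Qed.

Lemma Fz_strict a b z1 z2 l2 : H2 a b -> 0 <= z1 < z2 -> Fz a b z2 = Finite l2 ->
  exists l1, Fz a b z1 = Finite l1 /\ l1 < l2.
Proof.
  intros H Hz E. destruct (Fz_fin a b z2 l2 E) as [g2 [G2 ->]].
  pose proof (Gs_mono a b z1 z2 H ltac:(lra)) as M. pose proof (Gs_nonneg a b z1 H ltac:(lra)) as N.
  rewrite G2 in M. destruct (Gs a b z1) as [g1| |] eqn:G1; simpl in M, N; try contradiction.
  exists (g1 + a 1%nat * z1 ^ 2). split. rewrite Fz_eq, G1. reflexivity.
  assert (Ha := apos a b H 1 ltac:(lia)). assert (z1*z1 < z2*z2) by nra. simpl. nra.
Qed.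

Lemma Fz_inj a b z1 z2 l : H2 a b -> 0 <= z1 -> 0 <= z2 -> Fz a b z1 = Finite l -> Fz a b z2 = Finite l -> z1 = z2.
Proof.
  intros H H1 H2' E1 E2. destruct (Rtotal_order z1 z2) as [Hl|[He|Hg]]; auto.
  - destruct (Fz_strict a b z1 z2 l H ltac:(lra) E2) as [l1 [E L]]. rewrite E1 in E. injection E; lra.
  - destruct (Fz_strict a b z2 z1 l H ltac:(lra) E1) as [l1 [E L]]. rewrite E2 in E. injection E; lra.
Qed.


Lemma Fz_ge a b z : H2 a b -> 0 <= z -> Rbar_le (a 1%nat * z ^ 2) (Fz a b z).
Proof.
  intros H Hz. rewrite Fz_eq. pose proof (Gs_nonneg a b z H Hz).
  destruct (Gs a b z); simpl in *; auto; lra.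
Qed.

Lemma Fz_mono a b z1 z2 : H2 a b -> 0 <= z1 <= z2 -> Rbar_le (Fz a b z1) (Fz a b z2).
Proof.
  intros H Hz. rewrite !Fz_eq. pose proof (Gs_mono a b z1 z2 H Hz) as M.
  pose proof (Gs_nonneg a b z1 H ltac:(lra)) as N.
  assert (Ha := apos a b H 1 ltac:(lia)).
  assert (a 1%nat * z1 ^ 2 <= a 1%nat * z2^2). { apply Rmult_le_compat_l; [lra|]. apply pow_incr; lra. }
  destruct (Gs a b z1), (Gs a b z2); simpl in *; auto; try contradiction; lra.
Qed.

Lemma ps_le_Fz a b z n : H2 a b -> 0 <= z ->
  Rbar_le (sum_n (uu a b z) n + a 1%nat * z ^ 2) (Fz a b z).
Proof.
  intros H Hz. rewrite Fz_eq. pose proof (ps_le_Gs a b z n H Hz) as M.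
  destruct (Gs a b z); simpl in *; auto; lra.
Qed.

Lemma lim_gt (u : nat -> R) (l : Rbar) (c : R) : is_lim_seq u l -> Rbar_lt c l -> exists n, c < u n.
Proof.
  intros Hl Hc. apply is_lim_seq_spec in Hl. destruct l as [l| |]; simpl in *.
  - assert (He : 0 < l - c) by lra. destruct (Hl (mkposreal _ He)) as [N HN].
    specialize (HN N (le_n _)). simpl in HN. exists N. apply Rabs_def2 in HN. lra.
  - destruct (Hl c) as [N HN]. exists N. apply HN; lia.
  - contradiction.
Qed.

Lemma ps_cont a b n z : continuity_pt (fun z => sum_n (uu a b z) n + a 1%nat * z ^ 2) z.
Proof.
  apply continuity_pt_plus with (f1 := fun z => sum_n (uu a b z) n)
    (f2 := fun z => a 1%nat * z ^ 2).
  - induction n.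
    + apply continuity_pt_ext with (f := fun z => (a 1%nat * Qc a b 1) * z ^ 2).
      { intro; rewrite sum_O; unfold uu; reflexivity. }
      apply continuity_pt_mult with (f1 := fun _ => _) (f2 := fun z => z ^ 2).
      apply continuity_pt_const; intros ? ?; reflexivity.
      apply derivable_continuous_pt, derivable_pt_pow.
    + apply continuity_pt_ext with
        (f := fun z => sum_n (uu a b z) n + (a (S (S n)) * Qc a b (S (S n))) * z ^ (S (S n) + 1)).
      { intro; rewrite sum_Sn; unfold uu; reflexivity. }
      apply continuity_pt_plus with (f1 := fun z => sum_n (uu a b z) n) (f2 := fun z => _ * z ^ _); auto.
      apply continuity_pt_mult with (f1 := fun _ => _) (f2 := fun z => z ^ _).
      apply continuity_pt_const; intros ? ?; reflexivity.
      apply derivable_continuous_pt, derivable_pt_pow.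
  - apply continuity_pt_mult with (f1 := fun _ => _) (f2 := fun z => z ^ 2).
    apply continuity_pt_const; intros ? ?; reflexivity.
    apply derivable_continuous_pt, derivable_pt_pow.
Qed.

Lemma Gs_inside a b z : 0 <= z -> Rbar_lt z (z_s a b) ->
  Gs a b z = Finite (z * PSeries (zs_coef a b) z).
Proof.
  intros Hz Hr. apply series_Gs.
  assert (Hin : Rbar_lt (Rabs z) (CV_radius (zs_coef a b))).
  { rewrite Rabs_pos_eq by lra. exact Hr. }
  pose proof (CV_radius_inside _ _ Hin) as Hex.
  assert (Hs : is_series (fun k => zs_coef a b k * z ^ k) (PSeries (zs_coef a b) z)).
  { unfold PSeries. apply Series_correct. unfold ex_pseries in Hex.
    eapply ex_series_ext; [|exact Hex]. intro n. simpl. rewrite pow_n_pow. unfold scal; simpl.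
    unfold mult; simpl. ring. }
  assert (Hs1 : is_series (fun k => (fun k => zs_coef a b k * z ^ k) (S k)) (PSeries (zs_coef a b) z)).
  { apply (is_series_incr_1 (fun k => zs_coef a b k * z ^ k)).
    match goal with |- is_series _ ?v => replace v with (PSeries (zs_coef a b) z) end.
    exact Hs. unfold plus; simpl. unfold plus; simpl. ring. }
  pose proof (is_series_scal z _ _ Hs1) as Hs2.
  eapply is_series_ext; [|exact Hs2]. intro k. unfold scal, uu; simpl. unfold mult; simpl.
  replace (k + 1)%nat with (S k) by lia. simpl. ring.
Qed.


Lemma lams_lub a b : Rbar_is_lub
  (fun y => exists z : R, 0 <= z /\ Rbar_le (Finite z) (z_s a b) /\ y = Fz a b z) (lambda_s a b).
Proof. unfold lambda_s, Rbar_lub. exact (proj2_sig (Rbar_ex_lub _)). Qed.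

Lemma zs_ge0 a b : Rbar_le 0 (z_s a b).
Proof. apply CV_radius_ge_0. Qed.

Lemma exist_z a b lam : H2 a b -> 0 <= lam -> Rbar_le (Finite lam) (lambda_s a b) ->
  exists z, 0 <= z /\ Rbar_le (Finite z) (z_s a b) /\ Fz a b z = Finite lam.
Proof.
  intros H Hlam Hls.
  assert (Ha1 := apos a b H 1 ltac:(lia)).
  set (E := fun z => 0 <= z /\ Rbar_le (Finite z) (z_s a b) /\ Rbar_le (Fz a b z) (Finite lam)).
  assert (Hb : bound E).
  { exists (1 + lam / a 1%nat). intros z [Hz [_ Hf]].
    pose proof (Rbar_le_trans _ _ _ (Fz_ge a b z H Hz) Hf) as Q. simpl in Q.
    destruct (Rle_dec z 1). { assert (0 <= lam / a 1%nat) by (apply Rdiv_le_0_compat; lra). lra. }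
    assert (z <= lam / a 1%nat). { apply Rmult_le_reg_l with (a 1%nat); [lra|].
      field_simplify; [|lra]. nra. } lra. }
  assert (HE0 : E 0). { split; [lra|split]. apply zs_ge0. rewrite Fz_0. simpl; lra. }
  destruct (completeness E Hb (ex_intro _ 0 HE0)) as [m [Hub Hleast]].
  assert (Hm0 : 0 <= m) by (apply Hub; exact HE0).
  assert (Hmz : Rbar_le (Finite m) (z_s a b)).
  { pose proof (zs_ge0 a b) as Z. destruct (z_s a b) as [r| |] eqn:Er; simpl in *; auto.
    apply Hleast. intros z [_ [Hz _]]. first [rewrite Er in Hz|idtac]; exact Hz. }
  assert (Hii : Rbar_le (Fz a b m) (Finite lam)).
  { destruct (Rbar_le_dec (Fz a b m) (Finite lam)) as [ok|nok]; [exact ok|exfalso].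
    apply Rbar_not_le_lt in nok.
    assert (Hlt : Rbar_lt (lam - a 1%nat * m ^ 2) (Gs a b m)).
    { rewrite Fz_eq in nok. destruct (Gs a b m); simpl in *; auto. lra. }
    destruct (lim_gt _ _ _ (Gs_lim a b m H Hm0) Hlt) as [n Hn].
    set (h := fun z => sum_n (uu a b z) n + a 1%nat * z ^ 2).
    assert (Hhm : lam < h m) by (unfold h; lra).
    destruct (Req_dec m 0) as [Hm|Hm].
    { subst m. unfold h in Hhm. rewrite (Fz_0 a b) in nok. simpl in nok. lra. }
    destruct (ps_cont a b n m (h m - lam) ltac:(lra)) as [d [Hd Hcont]].
    assert (Hex : exists z, E z /\ m - d < z).
    { apply Classical_Prop.NNPP. intro Hno. assert (m <= m - d); [|lra].
      apply Hleast. intros z Hz. destruct (Rle_dec z (m - d)); auto. exfalso. apply Hno. exists z. split; auto; lra. }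
    destruct Hex as [z [Hz Hzd]].
    assert (Hzm : z <= m) by (apply Hub; exact Hz).
    assert (Hhz : lam < h z).
    { destruct (Req_dec z m) as [ -> |Hne]; auto.
      assert (Hd' := Hcont z). simpl in Hd'. unfold R_dist, D_x, no_cond in Hd'.
      assert (Habs : Rabs (h z - h m) < h m - lam).
      { unfold h. apply Hd'. split; [split; [exact I| intro E'; apply Hne; symmetry; exact E']|].
        rewrite Rabs_left1; lra. }
      apply Rabs_def2 in Habs. lra. }
    destruct Hz as [Hz0 [_ Hfz]].
    pose proof (Rbar_le_trans _ _ _ (ps_le_Fz a b z n H Hz0) Hfz) as Q. simpl in Q. unfold h in Hhz. lra. }
  exists m. split; [exact Hm0|split; [exact Hmz|]].
  pose proof (Fz_ge a b m H Hm0) as Hge.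
  destruct (Fz a b m) as [f| |] eqn:Ef; simpl in Hii, Hge; try contradiction.
  destruct (Rle_lt_or_eq_dec f lam Hii) as [Hflt| ->]; [exfalso|reflexivity].
  destruct (Rbar_lt_dec (Finite m) (z_s a b)) as [Hin|Hnin].
  - set (F := fun z => z * PSeries (zs_coef a b) z + a 1%nat * z ^ 2).
    assert (HF : forall z, 0 <= z -> Rbar_lt z (z_s a b) -> Fz a b z = Finite (F z)).
    { intros z Hz Hzr. rewrite Fz_eq, Gs_inside; auto. }
    assert (Hc : continuity_pt F m).
    { apply continuity_pt_plus with (f1 := fun z => z * PSeries (zs_coef a b) z) (f2 := fun z => a 1%nat * z^2).
      apply continuity_pt_mult with (f1 := fun z => z) (f2 := PSeries (zs_coef a b)).
      apply continuity_pt_id. apply PSeries_continuity. rewrite Rabs_pos_eq; auto.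
      apply continuity_pt_mult with (f1 := fun _ => _) (f2 := fun z => z ^ 2).
      apply continuity_pt_const; intros ? ?; reflexivity.
      apply derivable_continuous_pt, derivable_pt_pow. }
    assert (HFm : F m = f). { rewrite HF in Ef; auto. injection Ef; auto. }
    destruct (Hc (lam - f) ltac:(lra)) as [d [Hd Hcont]].
    assert (Hd2 : exists d', 0 < d' /\ d' <= d /\ Rbar_lt (m + d') (z_s a b)).
    { destruct (z_s a b) as [r| |] eqn:Er; simpl in Hin.
      - exists (Rmin d ((r - m)/2)). split; [apply Rmin_pos; lra|split; [apply Rmin_l|]].
        simpl. pose proof (Rmin_r d ((r - m)/2)). lra.
      - exists d. split; auto; split; [lra|]. simpl; auto.
      - contradiction. }
    destruct Hd2 as [d' [Hd'0 [Hd'd Hd'r]]].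
    set (z := m + d' / 2).
    assert (Hzr : Rbar_lt z (z_s a b)).
    { eapply Rbar_le_lt_trans; [|exact Hd'r]. simpl. unfold z; lra. }
    assert (HEz : E z).
    { split; [unfold z; lra|split; [apply Rbar_lt_le; exact Hzr|]].
      rewrite HF; [|unfold z; lra|exact Hzr]. simpl.
      assert (Hd' := Hcont z). simpl in Hd'. unfold R_dist, D_x, no_cond in Hd'.
      assert (Habs : Rabs (F z - F m) < lam - f).
      { apply Hd'. split; [split; [exact I| unfold z; lra]|].
        rewrite Rabs_pos_eq; unfold z; lra. }
      apply Rabs_def2 in Habs. lra. }
    pose proof (Hub z HEz). unfold z in *; lra.
  - assert (Hzs : z_s a b = Finite m).
    { destruct (z_s a b) as [r| |]; simpl in *; try contradiction. f_equal. lra. }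
    destruct (lams_lub a b) as [_ Hl].
    assert (Hub2 : Rbar_is_upper_bound
      (fun y => exists z : R, 0 <= z /\ Rbar_le (Finite z) (z_s a b) /\ y = Fz a b z) (Finite f)).
    { intros y [z [Hz [Hzm ->]]]. rewrite <- Ef. apply Fz_mono; auto. split; auto.
      rewrite Hzs in Hzm. exact Hzm. }
    pose proof (Rbar_le_trans _ _ _ Hls (Hl _ Hub2)) as Q. simpl in Q. lra.
Qed.


Lemma ex_series_zero : ex_series (fun _ : nat => 0).
Proof.
  exists 0. change (is_lim_seq (sum_n (fun _ : nat => 0)) (Finite 0)). apply (is_lim_seq_ext (fun _ => 0)).
  - intro n. induction n. rewrite sum_O; reflexivity. rewrite sum_Sn, <- IHn. unfold plus; simpl; ring.
  - apply is_lim_seq_const.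
Qed.

Lemma normR (x : R) : norm x = Rabs x.
Proof. reflexivity. Qed.

Lemma terms_from_uu a b z : H2 a b -> 0 <= z -> ex_series (uu a b z) ->
  ex_series (fun j => a (S j) * (Qc a b (S j) * z ^ S j)).
Proof.
  intros H Hz Hex. destruct (Req_dec z 0) as [->|Hnz].
  - eapply ex_series_ext; [|exact ex_series_zero]. intro n. simpl. ring.
  - pose proof (ex_series_scal (/ z) _ Hex) as Hs. eapply ex_series_ext; [|exact Hs].
    intro n. unfold scal, uu; simpl; unfold mult; simpl. replace (n + 1)%nat with (S n) by lia.
    simpl. field. auto.
Qed.

Lemma uu_from_terms a b z : ex_series (fun j => a (S j) * (Qc a b (S j) * z ^ S j)) -> ex_series (uu a b z).
Proof.
  intros Hex. pose proof (ex_series_scal z _ Hex) as Hs. eapply ex_series_ext; [|exact Hs].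
  intro n. unfold scal, uu; simpl; unfold mult; simpl. replace (n + 1)%nat with (S n) by lia.
  simpl. ring.
Qed.

Lemma Fz_series a b z : H2 a b -> 0 <= z -> ex_series (uu a b z) ->
  Fz a b z = Finite (Series (uu a b z) + a 1%nat * z ^ 2).
Proof.
  intros H Hz Hex. rewrite Fz_eq, (series_Gs a b z (Series (uu a b z))). reflexivity.
  apply Series_correct; auto.
Qed.

Lemma QZ_steady a b z lam : H2 a b -> 0 <= z -> Fz a b z = Finite lam ->
  steady_state a b lam (fun i => Qc a b i * z ^ i).
Proof.
  intros H Hz E. destruct (Fz_fin a b z lam E) as [g [G ->]].
  pose proof (Gs_fin_series a b z g H Hz G) as Hs.
  split; [|split; [|split]].
  - intros i _. apply Rmult_le_pos; [apply Rlt_le, Qc_pos, H|apply pow_le; lra].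
  - apply terms_from_uu; auto. exists g; exact Hs.
  - rewrite (Series_ext _ (uu a b z)). rewrite (is_series_unique _ _ Hs). simpl. ring.
    intro n. unfold uu. replace (S n + 1)%nat with (S (S n)) by lia. simpl. ring.
  - assert (HJ : forall k, (1 <= k)%nat -> Jflux a b (fun i => Qc a b i * z ^ i) k = 0).
    { intros [|k] Hk; [lia|]. unfold Jflux. rewrite Qc_SS.
      assert (Hb := bpos a b H (S (S k)) ltac:(lia)). simpl. field. lra. }
    intros i Hi. rewrite !HJ by lia. reflexivity.
Qed.

Lemma summ_le a b x z l : H2 a b -> 0 <= x <= z -> Fz a b z = Finite l ->
  ex_series (fun j => a (S j) * (Qc a b (S j) * x ^ S j)).
Proof.
  intros H Hx E. destruct (Fz_fin a b z l E) as [g [G _]].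
  pose proof (Gs_fin_series a b z g H ltac:(lra) G) as Hs.
  assert (Hz : ex_series (fun j => a (S j) * (Qc a b (S j) * z ^ S j))).
  { apply terms_from_uu; [auto|lra|]. exists g; exact Hs. }
  apply (@ex_series_le R_AbsRing R_CompleteNormedModule) with (2 := Hz). intro n. rewrite normR.
  assert (0 < a (S n)) by (apply (apos a b H); lia). pose proof (Qc_pos a b H (S n)).
  assert (0 <= x ^ S n) by (apply pow_le; lra).
  rewrite Rabs_pos_eq by (apply Rmult_le_pos; [lra|apply Rmult_le_pos; lra]).
  apply Rmult_le_compat_l; [lra|]. apply Rmult_le_compat_l; [lra|]. apply pow_incr; lra.
Qed.

Lemma ss_x_nonneg a b lam C : steady_state a b lam C -> 0 <= C 1%nat.
Proof. intros [Hp _]. apply Hp; lia. Qed.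

Lemma ss_flux_eq a b lam C : steady_state a b lam C -> forall i, (1 <= i)%nat ->
  a i * C 1%nat * C i - b (S i) * C (S i) = Jflux a b C 1.
Proof. intros Hs i Hi. rewrite <- (flux_const a b lam C Hs i Hi). reflexivity. Qed.

Lemma ss_Jpos a b lam C : H2 a b -> steady_state a b lam C -> ~ (0 < Jflux a b C 1).
Proof.
  intros H Hs HJ. set (J := Jflux a b C 1) in *. set (x := C 1%nat).
  assert (Hx := ss_x_nonneg a b lam C Hs).
  assert (Hge : forall i, (1 <= i)%nat -> J <= a i * x * C i).
  { intros i Hi. pose proof (ss_flux_eq a b lam C Hs i Hi). destruct Hs as [Hp _].
    pose proof (Hp (S i) ltac:(lia)). pose proof (bpos a b H (S i) ltac:(lia)).
    assert (0 <= b (S i) * C (S i)) by (apply Rmult_le_pos; lra). unfold J, x. lra. }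
  assert (Hxp : 0 < x).
  { destruct (Req_dec x 0) as [E|E]; [|unfold x in *; lra].
    specialize (Hge 1%nat (le_n _)). rewrite E in Hge. lra. }
  destruct Hs as [_ [Hex _]]. apply ex_series_lim_0, is_lim_seq_spec in Hex.
  assert (He : 0 < J / x) by (apply Rdiv_lt_0_compat; lra).
  destruct (Hex (mkposreal _ He)) as [N HN]. specialize (HN N (le_n _)). simpl in HN.
  specialize (Hge (S N) ltac:(lia)).
  assert (J / x <= a (S N) * C (S N)).
  { apply Rmult_le_reg_r with x; auto. field_simplify; lra. }
  rewrite Rminus_0_r in HN. apply Rabs_def2 in HN. lra.
Qed.

Lemma ss_Jneg a b lam C : H2 a b -> steady_state a b lam C -> Jflux a b C 1 < 0 ->
  forall i, (1 <= i)%nat -> - Jflux a b C 1 * (a (S i) / b (S i)) <= a (S i) * C (S i).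
Proof.
  intros H Hs HJ i Hi. pose proof (ss_flux_eq a b lam C Hs i Hi) as Eq.
  assert (Hx := ss_x_nonneg a b lam C Hs).
  destruct Hs as [Hp _]. pose proof (Hp i Hi). pose proof (bpos a b H (S i) ltac:(lia)).
  pose proof (apos a b H i Hi). pose proof (apos a b H (S i) ltac:(lia)).
  assert (0 <= a i * C 1%nat * C i) by (apply Rmult_le_pos; [apply Rmult_le_pos|]; lra).
  assert (- Jflux a b C 1 <= b (S i) * C (S i)) by lra.
  unfold Rdiv. rewrite <- Rmult_assoc, (Rmult_comm _ (a (S i))), Rmult_assoc.
  apply Rmult_le_compat_l; [lra|]. apply Rmult_le_reg_l with (b (S i)); [lra|].
  field_simplify; lra.
Qed.

Lemma ss_J0 a b lam C : H2 a b -> steady_state a b lam C -> Jflux a b C 1 = 0 ->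
  (forall i, (1 <= i)%nat -> C i = Qc a b i * C 1%nat ^ i) /\
  Fz a b (C 1%nat) = Finite lam /\
  ex_series (fun j => a (S j) * (Qc a b (S j) * C 1%nat ^ S j)).
Proof.
  intros H Hs HJ. pose proof (J0_form a b lam C H Hs HJ) as HC.
  assert (Hx := ss_x_nonneg a b lam C Hs). set (x := C 1%nat) in *.
  destruct Hs as [_ [Hex [Heq _]]].
  assert (Hex' : ex_series (fun j => a (S j) * (Qc a b (S j) * x ^ S j))).
  { eapply ex_series_ext; [|exact Hex]. intro n. simpl. rewrite HC by lia. reflexivity. }
  split; auto. split; auto.
  rewrite Fz_series; auto. 2: apply uu_from_terms; auto.
  f_equal. rewrite (Series_ext (uu a b x) (fun j => a (S j) * x * C (S j))). fold x in Heq. lra.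
  intro n. unfold uu. rewrite HC by lia. replace (S n + 1)%nat with (S (S n)) by lia. simpl. ring.
Qed.

Lemma le_radius a b x : H2 a b -> 0 <= x -> ex_series (fun j => a (S j) * (Qc a b (S j) * x ^ S j)) ->
  Rbar_le (Finite x) (z_s a b).
Proof.
  intros H Hx Hex. unfold z_s, CV_radius. destruct (Lub_Rbar_correct (CV_disk (zs_coef a b))) as [Hub _].
  rewrite <- (Rabs_pos_eq x Hx). apply Hub. unfold CV_disk.
  apply ex_series_incr_1. eapply ex_series_ext; [|exact Hex]. intro n. change (zs_coef a b (S n)) with (a (S n) * Qc a b (S n)).
  assert (0 < a (S n)) by (apply (apos a b H); lia). pose proof (Qc_pos a b H (S n)).
  assert (0 <= x ^ S n) by (apply pow_le; lra).
  rewrite (Rabs_pos_eq x Hx). rewrite Rabs_pos_eq. rewrite Rmult_assoc; reflexivity.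
  apply Rmult_le_pos; [apply Rmult_le_pos|]; lra.
Qed.


Lemma sum_SnR (v : nat -> R) n : sum_n v (S n) = sum_n v n + v (S n).
Proof. rewrite sum_Sn. reflexivity. Qed.

Lemma ln_le_xm1 y : 0 < y -> ln y <= y - 1.
Proof. intro Hy. pose proof (exp_ineq1_le (ln y)). rewrite exp_ln in H; lra. Qed.

Lemma exp_le_mono x y : x <= y -> exp x <= exp y.
Proof. intro H. destruct (Rle_lt_or_eq_dec _ _ H) as [h| ->]; [apply Rlt_le, exp_increasing; auto|lra]. Qed.

Lemma INR_S_pos n : 0 < INR (S n).
Proof. apply lt_0_INR; lia. Qed.

Lemma harm_lb n : ln (INR (S (S n))) <= sum_n (fun k => / INR (S k)) n.
Proof.
  induction n.
  - rewrite sum_O. pose proof (ln_le_xm1 (INR 2) ltac:(simpl; lra)). simpl in *. lra.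
  - rewrite sum_SnR.
    assert (E : ln (INR (S (S (S n)))) = ln (INR (S (S n))) + ln (INR (S (S (S n))) / INR (S (S n)))).
    { rewrite ln_div; [ring| apply INR_S_pos| apply INR_S_pos]. }
    pose proof (ln_le_xm1 (INR (S (S (S n))) / INR (S (S n))) ltac:(apply Rdiv_lt_0_compat; apply INR_S_pos)).
    assert (INR (S (S (S n))) / INR (S (S n)) - 1 = / INR (S (S n))).
    { rewrite (S_INR (S (S n))). field. pose proof (INR_S_pos (S n)). lra. }
    lra.
Qed.

Lemma harm_div : ~ ex_series (fun n => / INR (S n)).
Proof.
  intros [l Hl]. assert (Hle : forall n, sum_n (fun k => / INR (S k)) n <= l).
  { apply (is_lim_seq_incr_compare _ l). exact Hl. intro n. apply sum_incr'.
    intro j. apply Rlt_le, Rinv_0_lt_compat, INR_S_pos. }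
  destruct (INR_unbounded (exp l)) as [n Hn].
  pose proof (harm_lb n). pose proof (Hle n).
  assert (l < ln (INR (S (S n)))).
  { rewrite <- (ln_exp l). apply ln_increasing. apply exp_pos.
    apply Rlt_le_trans with (INR n); [lra|apply le_INR; lia]. }
  lra.
Qed.

Lemma harm_tail (v : nat -> R) c N : 0 < c -> (forall k, (N <= k)%nat -> c / INR (S k) <= v k) -> ~ ex_series v.
Proof.
  intros Hc Hv Hex. apply harm_div.
  apply (ex_series_incr_n (fun n => / INR (S n)) N).
  apply (ex_series_incr_n v N) in Hex.
  assert (H1 : ex_series (fun k => c / INR (S (N + k)))).
  { apply (@ex_series_le R_AbsRing R_CompleteNormedModule) with (2 := Hex). intro k. rewrite normR.
    rewrite Rabs_pos_eq. apply Hv; lia. apply Rlt_le, Rdiv_lt_0_compat; auto; apply INR_S_pos. }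
  pose proof (ex_series_scal (/ c) _ H1) as H2. eapply ex_series_ext; [|exact H2].
  intro k. pose proof (INR_S_pos (N+k)) as P. change (/ c * (c / INR (S (N + k))) = / INR (S (N + k))). field. lra.
Qed.

Lemma bounded_ex_series (v : nat -> R) M : (forall n, 0 <= v n) -> (forall n, sum_n v n <= M) -> ex_series v.
Proof.
  intros Hv HM. destruct (growing_cv (sum_n v)) as [l Hl].
  - intro n. apply sum_incr'; auto.
  - exists M. intros x [i ->]. apply HM.
  - exists l. apply is_lim_seq_Reals in Hl. exact Hl.
Qed.

Lemma Rpower_base_1 y : Rpower 1 y = 1.
Proof. unfold Rpower. rewrite ln_1, Rmult_0_r, exp_0. reflexivity. Qed.

Lemma Rpower_neg_anti x y nu : 0 < x <= y -> 0 <= nu -> Rpower y (- nu) <= Rpower x (- nu).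
Proof.
  intros Hx Hnu. unfold Rpower. apply exp_le_mono.
  pose proof (ln_le x y ltac:(lra) ltac:(lra)). nra.
Qed.

Lemma pser nu : 1 < nu -> ex_series (fun n => Rpower (INR (S n)) (- nu)).
Proof.
  intro Hnu. set (t := nu - 1). assert (Ht : 0 < t) by (unfold t; lra).
  set (f := fun y => Rpower y (- t)).
  assert (Hstep : forall n, Rpower (INR (S (S n))) (- nu) <= / t * (f (INR (S n)) - f (INR (S (S n))))).
  { intro n. pose proof (INR_S_pos n) as P1.
    assert (Hlt : INR (S n) < INR (S (S n))) by (rewrite (S_INR (S n)); lra).
    destruct (MVT_cor2 f (fun y => - t * Rpower y (- t - 1)) _ _ Hlt) as [c [Hc Hcr]].
    { intros c Hc. unfold f. apply derivable_pt_lim_power. lra. }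
    rewrite (S_INR (S n)) in Hc at 2. replace (INR (S n) + 1 - INR (S n)) with 1 in Hc by ring.
    replace (- t - 1) with (- nu) in Hc by (unfold t; ring).
    pose proof (Rpower_neg_anti c (INR (S (S n))) nu ltac:(lra) ltac:(lra)).
    apply Rmult_le_reg_l with t; auto. rewrite <- Rmult_assoc, Rinv_r, Rmult_1_l by lra. assert (t * Rpower (INR (S (S n))) (- nu) <= t * Rpower c (- nu)) by (apply Rmult_le_compat_l; lra). lra. }
  assert (Hf0 : forall y, 0 <= f y). { intro y. unfold f, Rpower. apply Rlt_le, exp_pos. }
  assert (Hb : forall n, sum_n (fun n => Rpower (INR (S n)) (- nu)) n <= 1 + / t * (1 - f (INR (S n)))).
  { induction n.
    - rewrite sum_O. unfold f. simpl INR. rewrite !Rpower_base_1. lra.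
    - rewrite sum_SnR. specialize (Hstep n).
      assert (/ t * (1 - f (INR (S n))) + / t * (f (INR (S n)) - f (INR (S (S n)))) = / t * (1 - f (INR (S (S n))))) by ring.
      lra. }
  apply bounded_ex_series with (1 + / t).
  - intro n. unfold Rpower. apply Rlt_le, exp_pos.
  - intro n. specialize (Hb n). pose proof (Hf0 (INR (S n))). assert (0 < / t) by (apply Rinv_0_lt_compat; lra).
    assert (/ t * (1 - f (INR (S n))) <= / t * 1) by (apply Rmult_le_compat_l; lra). lra.
Qed.


Fixpoint Dseq (a b : nat -> R) (x : R) (n : nat) : R :=
  match n with
  | O => 0
  | S m => match m with
           | O => 0
           | S _ => (a m * x * Dseq a b x m + 1) / b n
           end
  end.

Lemma Dseq_SS a b x k : Dseq a b x (S (S k)) = (a (S k) * x * Dseq a b x (S k) + 1) / b (S (S k)).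
Proof. reflexivity. Qed.

Lemma Dseq_nonneg a b x : H2 a b -> 0 <= x -> forall i, 0 <= Dseq a b x i.
Proof.
  intros H Hx i. induction i as [|[|k] IH]; try (simpl; lra).
  rewrite Dseq_SS. apply Rdiv_le_0_compat; [|apply (bpos a b H); lia].
  pose proof (apos a b H (S k) ltac:(lia)).
  assert (0 <= a (S k) * x * Dseq a b x (S k)) by (apply Rmult_le_pos; [apply Rmult_le_pos|]; lra). lra.
Qed.

Lemma rho_le (i : nat) nu : (1 <= i)%nat -> 1 < nu -> Rpower (INR i) (- nu) <= / INR i.
Proof.
  intros Hi Hnu. rewrite Rpower_Ropp. apply Rinv_le_contravar.
  apply lt_0_INR; lia.
  destruct (Nat.eq_dec i 1) as [->|Hne].
  - simpl. rewrite Rpower_base_1. lra.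
  - assert (1 < INR i). { replace 1 with (INR 1) by reflexivity. apply lt_INR; lia. }
    rewrite <- (Rpower_1 (INR i)) at 1 by lra. apply Rlt_le, Rpower_lt; lra.
Qed.

Lemma Dseq_sum a b x nu N : H2 a b -> 0 <= x -> 1 < nu ->
  (forall i, (N <= i)%nat -> b i > Rpower (INR i) nu * a i) ->
  ex_series (fun j => a (S j) * Dseq a b x (S j)).
Proof.
  intros H Hx Hnu Hb.
  set (w := fun i => a i * Dseq a b x i).
  assert (Hw0 : forall i, (1 <= i)%nat -> 0 <= w i).
  { intros i Hi. unfold w. apply Rmult_le_pos; [apply Rlt_le, (apos a b H); auto|apply Dseq_nonneg; auto]. }
  assert (Hrec : forall i, (1 <= i)%nat -> w (S i) = a (S i) / b (S i) * (x * w i + 1)).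
  { intros [|k] Hk; [lia|]. unfold w. rewrite Dseq_SS. pose proof (bpos a b H (S (S k)) ltac:(lia)).
    field. lra. }
  assert (Hr : forall i, (max N 1 <= i)%nat -> a i / b i <= Rpower (INR i) (- nu)).
  { intros i Hi. assert (Pi : 0 < INR i) by (apply lt_0_INR; lia).
    pose proof (Hb i ltac:(lia)). pose proof (apos a b H i ltac:(lia)). pose proof (bpos a b H i ltac:(lia)).
    rewrite Rpower_Ropp. assert (Pp : 0 < Rpower (INR i) nu) by (unfold Rpower; apply exp_pos).
    apply Rmult_le_reg_r with (b i); auto. unfold Rdiv. rewrite Rmult_assoc, Rinv_l, Rmult_1_r by lra.
    apply Rmult_le_reg_l with (Rpower (INR i) nu); auto.
    rewrite <- Rmult_assoc, Rinv_r, Rmult_1_l by lra. lra. }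
  destruct (INR_unbounded (2 * x + 2)) as [n0 Hn0].
  set (K := max n0 (max N 1)).
  assert (HK : forall i, (K <= i)%nat -> a (S i) / b (S i) <= / (2 * x + 2)).
  { intros i Hi. eapply Rle_trans; [apply Hr; lia|]. eapply Rle_trans; [apply rho_le; [lia|lra]|].
    apply Rinv_le_contravar; [lra|]. apply Rle_trans with (INR n0); [lra|apply le_INR; lia]. }
  set (M := w K + 2).
  assert (HM : forall i, (K <= i)%nat -> w i <= M).
  { intros i Hi. induction Hi. unfold M; lra.
    rewrite Hrec by lia. specialize (HK m Hi).
    assert (Hwm := Hw0 m ltac:(lia)).
    assert (0 <= a (S m) / b (S m)).
    { apply Rdiv_le_0_compat; [apply Rlt_le, (apos a b H); lia|apply (bpos a b H); lia]. }
    assert (Hq : a (S m) / b (S m) * (2 * x + 2) <= 1).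
    { apply Rmult_le_reg_r with (/ (2*x+2)). apply Rinv_0_lt_compat; lra.
      rewrite Rmult_assoc, Rinv_r, Rmult_1_r, Rmult_1_l by lra. exact HK. }
    assert (Hm0 : 2 <= M) by (unfold M; pose proof (Hw0 K ltac:(lia)); lra).
    assert (a (S m) / b (S m) * (x * w m + 1) <= a (S m) / b (S m) * (x * M + 1)).
    { apply Rmult_le_compat_l; auto. apply Rplus_le_compat_r, Rmult_le_compat_l; lra. }
    nra. }
  assert (Hbound : forall k, a (S (S (K + k))) * Dseq a b x (S (S (K + k))) <=
                             (x * M + 1) * Rpower (INR (S (S (K + k)))) (- nu)).
  { intro k. change (w (S (S (K + k))) <= (x * M + 1) * Rpower (INR (S (S (K + k)))) (- nu)).
    rewrite Hrec by lia. pose proof (HM (S (K + k)) ltac:(lia)).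
    pose proof (Hw0 (S (K + k)) ltac:(lia)).
    pose proof (Hr (S (S (K + k))) ltac:(lia)).
    assert (0 <= a (S (S (K + k))) / b (S (S (K + k)))).
    { apply Rdiv_le_0_compat; [apply Rlt_le, (apos a b H); lia|apply (bpos a b H); lia]. }
    assert (0 <= x * w (S (K + k)) + 1) by nra.
    apply Rle_trans with (a (S (S (K + k))) / b (S (S (K + k))) * (x * M + 1)).
    apply Rmult_le_compat_l; auto. nra.
    rewrite Rmult_comm. apply Rmult_le_compat_l; nra. }
  apply (ex_series_incr_n _ (S K)).
  pose proof (ex_series_scal (x * M + 1) _ (proj1 (ex_series_incr_n _ (S K)) (pser nu Hnu))) as Hp.
  apply (@ex_series_le R_AbsRing R_CompleteNormedModule) with (2 := Hp). intro k. rewrite normR.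
  rewrite Rabs_pos_eq. replace (S (S K + k)) with (S (S (K + k))) by lia.
  change (scal (x * M + 1) (Rpower (INR (S (S K + k))) (- nu))) with ((x * M + 1) * Rpower (INR (S (S K + k))) (- nu)).
  replace (S (S K + k)) with (S (S (K + k))) by lia. apply Hbound.
  apply Rmult_le_pos; [apply Rlt_le, (apos a b H); lia|apply Dseq_nonneg; auto].
Qed.


Lemma Cst_steady a b lam x c Fx T : H2 a b -> 0 <= x -> 0 <= c -> Fz a b x = Finite Fx ->
  is_series (fun j => a (S j) * Dseq a b x (S j)) T -> lam = Fx + c * x * T ->
  steady_state a b lam (fun i => Qc a b i * x ^ i + c * Dseq a b x i).
Proof.
  intros H Hx Hc E HT Hlam.
  destruct (Fz_fin a b x Fx E) as [g [G HFx]].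
  pose proof (Gs_fin_series a b x g H Hx G) as Hg.
  assert (Hq := summ_le a b x x Fx H ltac:(lra) E).
  set (Sq := Series (fun j => a (S j) * (Qc a b (S j) * x ^ S j))).
  assert (HSq : is_series (fun j => a (S j) * (Qc a b (S j) * x ^ S j)) Sq) by (apply Series_correct; auto).
  assert (Hgx : g = x * Sq).
  { pose proof (is_series_scal x _ _ HSq) as Hs. apply (is_series_unique (uu a b x)) in Hg.
    rewrite <- Hg. apply is_series_unique. eapply is_series_ext; [|exact Hs]. intro n.
    change (x * (a (S n) * (Qc a b (S n) * x ^ S n)) = uu a b x n). unfold uu.
    replace (S n + 1)%nat with (S (S n)) by lia. simpl. ring. }
  assert (Hall : is_series (fun j => a (S j) * (Qc a b (S j) * x ^ S j + c * Dseq a b x (S j))) (Sq + c * T)).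
  { pose proof (is_series_plus _ _ _ _ HSq (is_series_scal c _ _ HT)) as Hs.
    eapply is_series_ext; [|exact Hs]. intro n.
    change (a (S n) * (Qc a b (S n) * x ^ S n) + c * (a (S n) * Dseq a b x (S n)) =
            a (S n) * (Qc a b (S n) * x ^ S n + c * Dseq a b x (S n))). ring. }
  split; [|split; [|split]].
  - intros i _. pose proof (Qc_pos a b H i). pose proof (Dseq_nonneg a b x H Hx i).
    assert (0 <= x ^ i) by (apply pow_le; lra).
    apply Rplus_le_le_0_compat; apply Rmult_le_pos; lra.
  - exists (Sq + c * T). exact Hall.
  - change (Qc a b 1 * x ^ 1 + c * Dseq a b x 1) with (1 * x ^ 1 + c * 0).
    rewrite (Series_ext _ (fun j => (x) * (a (S j) * (Qc a b (S j) * x ^ S j + c * Dseq a b x (S j))))).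
    rewrite Series_scal_l, (is_series_unique _ _ Hall). subst lam. rewrite HFx, Hgx. simpl. ring.
    intro n. simpl. ring.
  - assert (HJ : forall k, (1 <= k)%nat -> Jflux a b (fun i => Qc a b i * x ^ i + c * Dseq a b x i) k = - c).
    { intros [|k] Hk; [lia|]. unfold Jflux. rewrite Qc_SS, Dseq_SS.
      change (Qc a b 1 * x ^ 1 + c * Dseq a b x 1) with (1 * x ^ 1 + c * 0).
      assert (Hb := bpos a b H (S (S k)) ltac:(lia)). simpl. field. lra. }
    intros i Hi. rewrite !HJ by lia. reflexivity.
Qed.

Lemma ratio_pos a b r : H2 a b -> H3 a b -> H4 a -> z_s a b = Finite r ->
  exists eps N, 0 < eps /\ forall i, (N <= i)%nat -> eps <= a (S i) / b (S i).
Proof.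
  intros H H3' [l [Hl H4']] Hr. unfold H3 in H3'. rewrite Hr in H3'.
  assert (Hr0 : 0 <= r). { pose proof (zs_ge0 a b) as Z. rewrite Hr in Z. exact Z. }
  assert (HA : exists m1 N1, 0 < m1 /\ forall i, (N1 <= i)%nat -> m1 <= Qc a b (S i) / Qc a b i).
  { apply is_lim_seq_spec in H3'. unfold Rbar_inv_ext in H3'.
    destruct (Req_EM_T r 0) as [_|Hne]; cbn -[Qc] in H3'.
    - destruct (H3' 1) as [N1 HN]. exists 1, N1. split; [lra|]. intros i Hi. left. apply HN; auto.
    - assert (Hp : 0 < / r / 2) by (apply Rdiv_lt_0_compat; [apply Rinv_0_lt_compat; lra|lra]).
      destruct (H3' (mkposreal _ Hp)) as [N1 HN]. exists (/ r / 2), N1. split; auto.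
      intros i Hi. specialize (HN i Hi). cbn -[Qc] in HN. apply Rabs_def2 in HN. lra. }
  destruct HA as [m1 [N1 [Hm1 HN1]]].
  apply is_lim_seq_spec in H4'. assert (Hp : 0 < l / 2) by lra.
  destruct (H4' (mkposreal _ Hp)) as [N2 HN2].
  exists (m1 * (l / 2)), (max 1 (max N1 N2)). split; [nra|].
  intros i Hi. specialize (HN1 i ltac:(lia)). specialize (HN2 i ltac:(lia)). simpl in HN2.
  apply Rabs_def2 in HN2.
  destruct i as [|k]; [lia|].
  pose proof (apos a b H (S k) ltac:(lia)). pose proof (apos a b H (S (S k)) ltac:(lia)).
  pose proof (bpos a b H (S (S k)) ltac:(lia)). pose proof (Qc_pos a b H (S k)).
  assert (E : a (S (S k)) / b (S (S k)) = Qc a b (S (S k)) / Qc a b (S k) * (a (S (S k)) / a (S k))).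
  { rewrite Qc_SS. field. repeat split; lra. }
  rewrite E. apply Rmult_le_compat; lra.
Qed.


Lemma lams_ub a b z : 0 <= z -> Rbar_le (Finite z) (z_s a b) -> Rbar_le (Fz a b z) (lambda_s a b).
Proof. intros Hz Hzs. destruct (lams_lub a b) as [Hub _]. apply Hub. exists z; auto. Qed.

Lemma series_pos_term (v : nat -> R) T j : (forall n, 0 <= v n) -> is_series v T -> v j <= T.
Proof.
  intros Hv HT. pose proof (is_lim_seq_incr_compare (sum_n v) T HT (fun n => sum_incr' v Hv n) j).
  destruct j. rewrite sum_O in H. lra.
  rewrite sum_SnR in H. pose proof (sum_nonneg' v Hv j). lra.
Qed.

Theorem mainTheorem13 (a b : nat -> R) (alpha lam : R) :
  0 <= alpha <= 1 -> 0 <= lam ->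
  H1 a b alpha -> H2 a b -> H3 a b -> H4 a ->
  (Rbar_le (Finite lam) (lambda_s a b) ->
     exists z : R,
       (0 <= z /\ Rbar_le (Finite z) (z_s a b) /\ Fz a b z = Finite lam) /\
       (forall z', 0 <= z' -> Rbar_le (Finite z') (z_s a b) ->
                   Fz a b z' = Finite lam -> z' = z) /\
       steady_state a b lam (fun i => Qc a b i * z ^ i) /\
       ((exists N, forall i, (N <= i)%nat -> b i <= INR i * a i) ->
          forall C, steady_state a b lam C ->
            forall i, (1 <= i)%nat -> C i = Qc a b i * z ^ i) /\
       ((exists nu N, 1 < nu /\ forall i, (N <= i)%nat -> b i > Rpower (INR i) nu * a i) ->
          infinitely_many_steady a b lam)) /\
  (Rbar_lt (lambda_s a b) (Finite lam) ->
     forall C, ~ steady_state a b lam C).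
Proof.
  intros _ Hlam _ H H3' H4'.
  assert (Ha1 := apos a b H 1 ltac:(lia)).
  split.
  - intro Hls. destruct (exist_z a b lam H Hlam Hls) as [z [Hz0 [Hzs HFz]]].
    exists z. split; [auto|]. split.
    { intros z' Hz' _ E'. apply (Fz_inj a b z' z lam H); auto. }
    split; [apply QZ_steady; auto|]. split.
    + intros [N HN] C Hs i Hi.
      destruct (Rtotal_order (Jflux a b C 1) 0) as [Hneg|[H0|Hpos]].
      * exfalso. pose proof (ss_Jneg a b lam C H Hs Hneg) as Hg.
        destruct Hs as [_ [Hex _]].
        apply (harm_tail (fun j => a (S j) * C (S j)) (- Jflux a b C 1) (max N 1)); [lra| |exact Hex].
        intros k Hk. eapply Rle_trans; [|apply Hg; lia].
        unfold Rdiv. apply Rmult_le_compat_l; [lra|].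
        pose proof (HN (S k) ltac:(lia)). pose proof (apos a b H (S k) ltac:(lia)).
        pose proof (bpos a b H (S k) ltac:(lia)). pose proof (INR_S_pos k).
        apply Rmult_le_reg_l with (INR (S k) * b (S k)); [nra|].
        field_simplify; try lra. 
      * destruct (ss_J0 a b lam C H Hs H0) as [HC [HF _]].
        rewrite HC by auto. f_equal. f_equal.
        apply (Fz_inj a b _ _ lam H); auto. apply (ss_x_nonneg a b lam C Hs).
      * exfalso. exact (ss_Jpos a b lam C H Hs Hpos).
    + intros [nu [N [Hnu HN]]].
      assert (HD : forall x, 0 <= x -> ex_series (fun j => a (S j) * Dseq a b x (S j))).
      { intros x Hx. apply (Dseq_sum a b x nu N); auto. }
      destruct (Rle_lt_or_eq_dec 0 lam Hlam) as [Hlp| <-].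
      * assert (Hzp : 0 < z).
        { destruct (Req_dec z 0) as [E|E]; [|lra]. rewrite E, Fz_0 in HFz. injection HFz. lra. }
        set (x := fun n : nat => z / INR (S (S n))).
        assert (Hx : forall n, 0 < x n < z).
        { intro n. unfold x. pose proof (INR_S_pos (S n)). split. apply Rdiv_lt_0_compat; lra.
          assert (1 < INR (S (S n))). { rewrite S_INR. pose proof (INR_S_pos n). lra. }
          apply Rmult_lt_reg_r with (INR (S (S n))); [lra|]. field_simplify; nra. }
        set (T := fun n => Series (fun j => a (S j) * Dseq a b (x n) (S j))).
        set (c := fun n => (lam - real (Fz a b (x n))) / (x n * T n)).
        exists (fun n i => Qc a b i * (x n) ^ i + c n * Dseq a b (x n) i). split.
        -- intro n. destruct (Fz_strict a b (x n) z lam H ltac:(specialize (Hx n); lra) HFz) as [Fx [EF HFx]].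
           assert (HT : is_series (fun j => a (S j) * Dseq a b (x n) (S j)) (T n)).
           { apply Series_correct, HD. specialize (Hx n); lra. }
           assert (HTp : 0 < T n).
           { assert (Hnn : forall j, 0 <= a (S j) * Dseq a b (x n) (S j)).
             { intro j. apply Rmult_le_pos; [apply Rlt_le, (apos a b H); lia|apply Dseq_nonneg; auto; specialize (Hx n); lra]. }
             pose proof (series_pos_term _ _ 1 Hnn HT) as Q. eapply Rlt_le_trans; [|exact Q].
             rewrite Dseq_SS. change (Dseq a b (x n) 1) with 0.
             pose proof (apos a b H 2 ltac:(lia)). pose proof (bpos a b H 2 ltac:(lia)).
             apply Rmult_lt_0_compat; auto. apply Rdiv_lt_0_compat; lra. }
           specialize (Hx n).
           apply (Cst_steady a b lam (x n) (c n) Fx (T n) H ltac:(lra)); auto.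
           ++ unfold c. rewrite EF. simpl. apply Rdiv_le_0_compat; [lra|apply Rmult_lt_0_compat; lra].
           ++ unfold c. rewrite EF. simpl. field. split; lra.
        -- intros n m Hnm. exists 1%nat. split; [lia|].
           change (Qc a b 1) with 1. change (Dseq a b (x n) 1) with 0. change (Dseq a b (x m) 1) with 0.
           intro E. apply Hnm. unfold x in E.
           rewrite !pow_1, !Rmult_1_l, !Rmult_0_r, !Rplus_0_r in E.
           assert (E2 : / INR (S (S n)) = / INR (S (S m))).
           { apply Rmult_eq_reg_l with z; [unfold Rdiv in E; lra|lra]. }
           apply (f_equal Rinv) in E2. rewrite !Rinv_inv in E2.
           assert (H0 := E2).
           apply INR_eq in H0. lia.
      * exists (fun n i => Qc a b i * 0 ^ i + INR n * Dseq a b 0 i). split.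
        -- intro n. apply (Cst_steady a b 0 0 (INR n) 0 (Series (fun j => a (S j) * Dseq a b 0 (S j))) H); try lra.
           apply pos_INR. apply Fz_0. apply Series_correct, HD; lra.
        -- intros n m Hnm. exists 2%nat. split; [lia|]. rewrite Dseq_SS.
           change (Dseq a b 0 1) with 0. pose proof (bpos a b H 2 ltac:(lia)).
           intro E. apply Hnm. apply INR_eq.
           assert (E2 : INR n / b 2%nat = INR m / b 2%nat).
           { replace (INR n / b 2%nat) with (Qc a b 2 * 0 ^ 2 + INR n * ((a 1%nat * 0 * 0 + 1) / b 2%nat)) by (simpl; field; lra).
             rewrite E. simpl; field; lra. }
           apply Rmult_eq_reg_r with (/ b 2%nat). exact E2. apply Rinv_neq_0_compat; lra.
  - intros Hlt C Hs.
    assert (Hfin : exists r, z_s a b = Finite r).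
    { pose proof (zs_ge0 a b) as Z. destruct (z_s a b) as [r| |] eqn:Er; [eauto| |simpl in Z; contradiction].
      exfalso. set (z := 1 + lam / a 1%nat).
      assert (Hz : 1 <= z) by (unfold z; assert (0 <= lam / a 1%nat) by (apply Rdiv_le_0_compat; lra); lra).
      assert (Hub := lams_ub a b z ltac:(lra) ltac:(rewrite Er; simpl; auto)).
      pose proof (Rbar_le_trans _ _ _ (Fz_ge a b z H ltac:(lra)) Hub) as Q.
      pose proof (Rbar_le_lt_trans _ _ _ Q Hlt) as Q2. simpl in Q2.
      assert (z <= z ^ 2) by (simpl; nra). assert (a 1%nat * z <= a 1%nat * z ^ 2) by (apply Rmult_le_compat_l; lra).
      assert (a 1%nat * z = a 1%nat + lam) by (unfold z; field; lra). lra. }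
    destruct Hfin as [r Hr].
    destruct (Rtotal_order (Jflux a b C 1) 0) as [Hneg|[H0|Hpos]].
    + pose proof (ss_Jneg a b lam C H Hs Hneg) as Hg.
      destruct (ratio_pos a b r H H3' H4' Hr) as [eps [N [Heps HN]]].
      destruct Hs as [_ [Hex _]]. apply ex_series_lim_0, is_lim_seq_spec in Hex.
      assert (Hp : 0 < - Jflux a b C 1 * eps) by nra.
      destruct (Hex (mkposreal _ Hp)) as [N2 HN2].
      set (k := max N2 (max N 1)). specialize (HN2 k ltac:(unfold k; lia)). cbn -[Jflux] in HN2.
      rewrite Rminus_0_r in HN2. apply Rabs_def2 in HN2.
      specialize (Hg k ltac:(unfold k; lia)). specialize (HN k ltac:(unfold k; lia)).
      assert (- Jflux a b C 1 * eps <= - Jflux a b C 1 * (a (S k) / b (S k))) by (apply Rmult_le_compat_l; lra).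
      lra.
    + destruct (ss_J0 a b lam C H Hs H0) as [_ [HF Hex]].
      pose proof (le_radius a b _ H (ss_x_nonneg a b lam C Hs) Hex) as Hle.
      pose proof (lams_ub a b _ (ss_x_nonneg a b lam C Hs) Hle) as Q. rewrite HF in Q.
      pose proof (Rbar_le_lt_trans _ _ _ Q Hlt). simpl in H1. lra.
    + exact (ss_Jpos a b lam C H Hs Hpos).
Qed.
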